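(* Assume $E\in\mathbb{S}^n_{++}$, $0<\alpha<1$ and $0\ne X\in\partial K_E(\alpha)$. Let $S:=\frac{1}{n-\alpha^2}\big(E^{-1}-\frac{\alpha^2}{\mathrm{tr}(E^{-1}X)}E^{-1}XE^{-1}\big)$ and $q(t):=\mathrm{tr}\big(((E+tX)S)^2\big)$. Then \[ 0<t\le\alpha/\|X\|_E\ \Rightarrow\ q(t)<\frac{1}{n-\alpha^2}\Big(1-2t\,\frac{1-\alpha}{n-\alpha^2}\,\|X\|_E\,\big(\alpha-t\|X\|_E\big)\Big). \]
   Context: $\mathbb{S}^n$ is the space of real symmetric $n\times n$ matrices, $\mathbb{S}^n_{++}$ the positive definite matrices. For $E\in\mathbb{S}^n_{++}$: $\|X\|_E=\mathrm{tr}((E^{-1}X)^2)^{1/2}$, and for $\gamma>0$, $K_E(\gamma)=\{X\in\mathbb{S}^n:\mathrm{tr}(E^{-1}X)\ge\gamma\|X\|_E\}$; $\partial$ denotes boundary. *)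

(* Defs.v *)
From mathcomp Require Import all_boot all_order all_algebra.
Set Implicit Arguments. Unset Strict Implicit. Unset Printing Implicit Defensive.
Import Order.TTheory GRing.Theory Num.Theory.
Local Open Scope ring_scope.

Definition symmetric_mx (R : rcfType) (n : nat) (X : 'M[R]_n) : Prop := X^T = X.

Definition posdef (R : rcfType) (n : nat) (E : 'M[R]_n) : Prop :=
  symmetric_mx E /\
  forall v : 'cV[R]_n, v != 0 -> 0 < (v^T *m E *m v) 0 0.

Definition normE (R : rcfType) (n : nat) (E X : 'M[R]_n) : R :=
  Num.sqrt (\tr ((invmx E *m X) *m (invmx E *m X))).

Definition K_E (R : rcfType) (n : nat) (E : 'M[R]_n) (gamma : R) (X : 'M[R]_n) : Prop :=
  symmetric_mx X /\ gamma * normE E X <= \tr (invmx E *m X).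

(* Topological boundary of a subset K of S^n (relative to S^n), X in closure(K)
   and in closure(S^n \ K); the topology on S^n is that of the norm ||.||_E
   (all norms on the finite-dimensional space S^n are equivalent). *)
Definition sym_boundary (R : rcfType) (n : nat) (E : 'M[R]_n)
    (K : 'M[R]_n -> Prop) (X : 'M[R]_n) : Prop :=
  symmetric_mx X /\
  (forall eps : R, 0 < eps ->
     exists Y, [/\ symmetric_mx Y, normE E (Y - X) < eps & K Y]) /\
  (forall eps : R, 0 < eps ->
     exists Y, [/\ symmetric_mx Y, normE E (Y - X) < eps & ~ K Y]).

(* Main.v *)
Require Import Defs.
From mathcomp Require Import all_boot all_order all_algebra.
From mathcomp Require Import ring lra.
Import Order.TTheory GRing.Theory Num.Theory.
Local Open Scope ring_scope.
Set Implicit Arguments. Unset Strict Implicit.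

Lemma chol_step (R : rcfType) n (a : 'M[R]_1) b c D :
  (forall D' : 'M[R]_n, D'^T = D' ->
    (forall v : 'cV_n, v != 0 -> 0 < (v^T *m D' *m v) 0 0) ->
    exists W : 'M_n, W^T *m D' *m W = 1%:M) ->
  (block_mx a b c D)^T = block_mx a b c D ->
  (forall v : 'cV_(1 + n), v != 0 -> 0 < (v^T *m block_mx a b c D *m v) 0 0) ->
  exists W : 'M_(1 + n), W^T *m block_mx a b c D *m W = 1%:M.
Proof.
move=> IH sE pE.
move: sE; rewrite tr_block_mx => /eq_block_mx [aT bT cT DT].
pose a0 := a 0 0.
have a0pos : 0 < a0.
  have := pE (col_mx 1%:M 0).
  rewrite col_mx_eq0 oner_eq0 /= => /(_ isT).
  by rewrite tr_col_mx mul_row_block trmx1 trmx0 !mul0mx !addr0 !mul1mx mul_row_col mulmx0 addr0 mulmx1.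
have ha : a = a0%:M by rewrite [LHS]mx11_scalar.
pose D' := D - a0^-1 *: (c *m b).
have sD' : D'^T = D'.
  by rewrite /D' linearB /= linearZ /= trmx_mul bT cT DT.
have pD' : forall w : 'cV_n, w != 0 -> 0 < (w^T *m D' *m w) 0 0.
  move=> w nw.
  have := pE (col_mx (- a0^-1 *: (b *m w)) w).
  rewrite col_mx_eq0 negb_and nw orbT => /(_ isT).
  rewrite tr_col_mx mul_row_block mul_row_col.
  rewrite !linearZ /= trmx_mul cT ha mul_mx_scalar scalerA mulrN mulfV ?gt_eqF // scaleN1r addNr mul0mx scaler0 add0r.
  rewrite /D' mulmxBr mulmxBl -scalemxAl -!scalemxAr -scalemxAl -!mulmxA.
  by rewrite mulmxDl -scalemxAl -!mulmxA scaleNr addrC.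
have [W' hW'] := IH D' sD' pD'.
pose s := (Num.sqrt a0)^-1.
exists (block_mx s%:M (- a0^-1 *: (b *m W')) 0 W').
rewrite tr_block_mx !mulmx_block tr_scalar_mx trmx0 !linearZ /= trmx_mul cT ha.
rewrite !mul0mx !mulmx0 !addr0 !mul_scalar_mx !mul_mx_scalar.
have a0n : a0 != 0 by rewrite gt_eqF.
have ss : s * (s * a0) = 1.
  rewrite mulrA -expr2 /s exprVn sqr_sqrtr ?ltW // mulVf //.
have kk : a0 *: (- a0^-1 *: (W'^T *m c)) + W'^T *m c = 0.
  by rewrite scalerA mulrN mulfV // scaleN1r addNr.
rewrite kk mul0mx !scaler0 !add0r scalar_mx_block; congr block_mx.
- by rewrite -[a0%:M]scalemx1 !scalerA ss scale1r.
- rewrite -!scalemxAl mul_scalar_mx !scalerA -scalerDl.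
  suff -> : - a0^-1 * s * a0 + s = 0 by rewrite scale0r.
  by rewrite mulrAC mulNr mulVf // mulN1r addNr.
- by rewrite -hW' /D' mulmxBr mulmxBl mulmxDl -scalemxAl -!scalemxAr -!scalemxAl !mulmxA scaleNr addrC.
Qed.

Lemma scalar_ineq (R : realFieldType) (N nu b alpha t m3 m4 c : R) :
  1 <= N -> 0 < nu -> b * nu = alpha -> 0 < alpha -> alpha < 1 ->
  0 < t -> t * nu <= alpha -> m3 <= nu ^+ 3 -> m4 <= nu ^+ 4 ->
  c * (N - alpha ^+ 2) = 1 ->
  c ^+ 2 * (N + 2 * (t - b) * (alpha * nu) + ((t - b) ^+ 2 - 2 * t * b) * nu ^+ 2
      - 2 * t * b * (t - b) * m3 + t ^+ 2 * b ^+ 2 * m4)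
  < c * (1 - 2 * t * ((1 - alpha) * c) * nu * (alpha - t * nu)).
Proof.
move=> N1 nu0 bnu a0 a1 t0 tnu h3 h4 cd.
have d0 : 0 < N - alpha ^+ 2 by nra.
have c0 : 0 < c by nra.
have b0 : 0 < b by nra.
have tb : t - b <= 0.
  have : (t - b) * nu <= 0 by nra.
  by rewrite pmulr_lle0.
have e3 : 2 * t * b * (t - b) * nu ^+ 3 <= 2 * t * b * (t - b) * m3.
  rewrite ler_wnM2l //. by rewrite -mulrA; apply: mulr_ge0_le0 => //; nra.
have e4 : t ^+ 2 * b ^+ 2 * m4 <= t ^+ 2 * b ^+ 2 * nu ^+ 4.
  by rewrite ler_wpM2l //; nra.
set L := (X in X < _).
have -> : c * (1 - 2 * t * ((1 - alpha) * c) * nu * (alpha - t * nu)) =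
   c ^+ 2 * ((N - alpha ^+ 2) - 2 * t * (1 - alpha) * nu * (alpha - t * nu)).
  rewrite mulrBr mulr1 {1}(_ : c = c ^+ 2 * (N - alpha ^+ 2)); last by rewrite expr2 -mulrA cd mulr1.
  ring.
rewrite /L ltr_pM2l ?exprn_gt0 //.
set s := t * nu.
have key : N + 2 * (t - b) * (alpha * nu) + ((t - b) ^+ 2 - 2 * t * b) * nu ^+ 2
      - 2 * t * b * (t - b) * nu ^+ 3 + t ^+ 2 * b ^+ 2 * nu ^+ 4
      = N - alpha ^+ 2 + s ^+ 2 - 2 * s * alpha - 2 * s * alpha * (s - alpha) + s ^+ 2 * alpha ^+ 2.
  rewrite /s -bnu; ring.
have s0 : 0 < s by rewrite /s mulr_gt0.
have s1 : 0 < s ^+ 2 * (1 - alpha ^+ 2) by rewrite mulr_gt0 ?exprn_gt0 //; nra.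
have e5 : 2 * t * (1 - alpha) * nu * (alpha - s) = 2 * (1 - alpha) * (s * alpha - s ^+ 2).
  rewrite /s; ring.
rewrite e5.
lra.
Qed.

Lemma cs_sum (R : realFieldType) (I : finType) (u v : I -> R) :
  (\sum_i u i * v i) ^+ 2 <= (\sum_i u i ^+ 2) * (\sum_i v i ^+ 2).
Proof.
have H : 0 <= \sum_i \sum_j (u i * v j - u j * v i) ^+ 2.
  by apply: sumr_ge0 => i _; apply: sumr_ge0 => j _; apply: sqr_ge0.
have E : \sum_i \sum_j (u i * v j - u j * v i) ^+ 2 =
   2 * ((\sum_i u i ^+ 2) * (\sum_i v i ^+ 2) - (\sum_i u i * v i) ^+ 2).
  transitivity (\sum_i \sum_j (u i ^+ 2 * v j ^+ 2 + u j ^+ 2 * v i ^+ 2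
                     - 2 * ((u i * v i) * (u j * v j)))).
    by apply: eq_bigr => i _; apply: eq_bigr => j _; ring.
  have P1 : \sum_i \sum_j u i ^+ 2 * v j ^+ 2 = (\sum_i u i ^+ 2) * (\sum_i v i ^+ 2).
    by rewrite mulr_suml; apply: eq_bigr => i _; rewrite mulr_sumr.
  have P2 : \sum_i \sum_j u j ^+ 2 * v i ^+ 2 = (\sum_i u i ^+ 2) * (\sum_i v i ^+ 2).
    by rewrite exchange_big /= P1.
  have P3 : \sum_i \sum_j 2 * ((u i * v i) * (u j * v j)) = 2 * (\sum_i u i * v i) ^+ 2.
    transitivity (2 * \sum_i \sum_j ((u i * v i) * (u j * v j))).
      by rewrite mulr_sumr; apply: eq_bigr => i _; rewrite mulr_sumr.
    by rewrite expr2 mulr_suml; congr (2 * _); apply: eq_bigr => i _; rewrite mulr_sumr.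
  under eq_bigr => i _ do rewrite sumrB big_split /=.
  rewrite sumrB big_split /= P1 P2 P3; ring.
rewrite E in H. nra.
Qed.

Definition fro (R : realFieldType) m n (A : 'M[R]_(m, n)) := \sum_i \sum_j A i j ^+ 2.

Lemma fro_ge0 (R : realFieldType) m n (A : 'M[R]_(m, n)) : 0 <= fro A.
Proof. by apply: sumr_ge0 => i _; apply: sumr_ge0 => j _; apply: sqr_ge0. Qed.

Lemma tr_mulT (R : realFieldType) m n (A B : 'M[R]_(m, n)) :
  \tr (A *m B^T) = \sum_i \sum_j A i j * B i j.
Proof.
by rewrite /mxtrace; apply: eq_bigr => i _; rewrite mxE; apply: eq_bigr => j _; rewrite mxE.
Qed.

Lemma fro_tr (R : realFieldType) m n (A : 'M[R]_(m, n)) : \tr (A *m A^T) = fro A.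
Proof. by rewrite tr_mulT; apply: eq_bigr => i _; apply: eq_bigr => j _; rewrite expr2. Qed.

Lemma tr_cs (R : realFieldType) m n (A B : 'M[R]_(m, n)) :
  \tr (A *m B^T) ^+ 2 <= fro A * fro B.
Proof.
rewrite tr_mulT /fro !pair_bigA /=.
exact: (cs_sum (fun p : 'I_m * 'I_n => A p.1 p.2) (fun p => B p.1 p.2)).
Qed.

Lemma fro_mul (R : realFieldType) m n p (A : 'M[R]_(m, n)) (B : 'M[R]_(n, p)) :
  fro (A *m B) <= fro A * fro B.
Proof.
rewrite /fro [X in _ <= _ * X]exchange_big /= mulr_suml; apply: ler_sum => i _.
rewrite mulr_sumr; apply: ler_sum => j _; rewrite mxE.
exact: (cs_sum (fun k => A i k) (fun k => B k j)).
Qed.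

Lemma trace_expand (R : comNzRingType) n (A : 'M[R]_n) (t b : R) :
  \tr (((1%:M + t *: A) *m (1%:M - b *: A)) *m ((1%:M + t *: A) *m (1%:M - b *: A))) =
  n%:R + 2 * (t - b) * \tr A + ((t - b) ^+ 2 - 2 * t * b) * \tr (A *m A)
  - 2 * t * b * (t - b) * \tr (A *m A *m A) + t ^+ 2 * b ^+ 2 * \tr (A *m A *m A *m A).
Proof.
have -> : (1%:M + t *: A) *m (1%:M - b *: A) = 1%:M + (t - b) *: A - (t * b) *: (A *m A).
  rewrite mulmxDl mulmxBr mulmxBr !mul1mx mulmx1 -scalemxAl -scalemxAr scalerA scalerBl.
  by rewrite !addrA (addrAC 1%:M).
rewrite !(mulmxDl, mulmxDr, mulmxBl, mulmxBr, mul1mx, mulmx1, mulmxN, mulNmx).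
rewrite -!scalemxAl -!scalemxAr !scalerA.
rewrite !(raddfD, raddfB, raddfN) /= !mxtraceZ mxtrace1 ?mulmxA.
ring.
Qed.

Lemma chol (R : rcfType) n (E : 'M[R]_n) : E^T = E ->
  (forall v : 'cV_n, v != 0 -> 0 < (v^T *m E *m v) 0 0) ->
  exists W : 'M_n, W^T *m E *m W = 1%:M.
Proof.
elim: n E => [|n IH] E sE pE.
  by exists 0; rewrite [LHS]flatmx0 [RHS]flatmx0.
have := @chol_step R n (ulsubmx (E : 'M_(1 + n))) (ursubmx (E : 'M_(1 + n)))
  (dlsubmx (E : 'M_(1 + n))) (drsubmx (E : 'M_(1 + n))) (IH).
rewrite submxK; exact.
Qed.

Lemma inv_chol (R : rcfType) n (E W : 'M[R]_n) :
  W^T *m E *m W = 1%:M -> invmx E = W *m W^T.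
Proof.
move=> h.
have h1 : E *m (W *m W^T) = 1%:M.
  by rewrite mulmxA; apply: mulmx1C; rewrite mulmxA.
have [uE _] := mulmx1_unit h1.
by rewrite -[RHS]mul1mx -(mulVmx uE) -mulmxA h1 mulmx1.
Qed.

Lemma sqrt_le (R : rcfType) (x y : R) : 0 <= y -> x <= y ^+ 2 -> Num.sqrt x <= y.
Proof.
move=> y0 h; rewrite -(ger0_norm y0) -sqrtr_sqr ler_sqrt ?sqr_ge0 //.
Qed.

Lemma le_of_sqr (R : rcfType) (x y : R) : 0 <= y -> x ^+ 2 <= y ^+ 2 -> x <= y.
Proof.
move=> y0 h; apply: (le_trans (ler_norm x)); rewrite -sqrtr_sqr; exact: sqrt_le.
Qed.

Lemma fro_add (R : realFieldType) m n (P Q : 'M[R]_(m, n)) :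
  fro (P + Q) = fro P + 2 * \tr (P *m Q^T) + fro Q.
Proof.
rewrite tr_mulT /fro mulr_sumr -!big_split; apply: eq_bigr => i _.
rewrite mulr_sumr -!big_split; apply: eq_bigr => j _; rewrite mxE /=; ring.
Qed.

Lemma fro_opp (R : realFieldType) m n (P : 'M[R]_(m, n)) : fro (- P) = fro P.
Proof.
by rewrite /fro; apply: eq_bigr => i _; apply: eq_bigr => j _; rewrite mxE sqrrN.
Qed.

Lemma sqrt_fro_add (R : rcfType) m n (P Q : 'M[R]_(m, n)) :
  Num.sqrt (fro (P + Q)) <= Num.sqrt (fro P) + Num.sqrt (fro Q).
Proof.
have a0 := sqrtr_ge0 (fro P); have b0 := sqrtr_ge0 (fro Q).
have ea := sqr_sqrtr (fro_ge0 P); have eb := sqr_sqrtr (fro_ge0 Q).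
apply: sqrt_le; first exact: addr_ge0.
rewrite fro_add.
have hc := tr_cs P Q.
rewrite -ea -eb in hc.
have : \tr (P *m Q^T) <= Num.sqrt (fro P) * Num.sqrt (fro Q).
  by apply: le_of_sqr; [apply: mulr_ge0 | rewrite exprMn].
move: ea eb; set a := Num.sqrt (fro P); set b := Num.sqrt (fro Q) => ea eb hx.
rewrite -ea -eb; nra.
Qed.

Lemma tr_bound (R : rcfType) n (B : 'M[R]_n) :
  `|\tr B| <= n%:R * Num.sqrt (fro B).
Proof.
have h := tr_cs B 1%:M.
rewrite trmx1 mulmx1 -(fro_tr (1%:M : 'M[R]_n)) trmx1 mulmx1 mxtrace1 in h.
have n0 : 0 <= n%:R :> R by rewrite ler0n.
have nn : n%:R <= (n%:R) ^+ 2 :> R.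
  case: n {B h} n0 => [|k] _; first by rewrite expr0n /=.
  by rewrite expr2 ler_peMl ?ler0n // ler1n.
rewrite -sqrtr_sqr; apply: sqrt_le; first by rewrite mulr_ge0 ?sqrtr_ge0.
rewrite exprMn sqr_sqrtr ?fro_ge0 //.
apply: (le_trans h); rewrite mulrC; apply: ler_wpM2r => //; exact: fro_ge0.
Qed.

Unset Implicit Arguments.

Theorem proposition4p6 (R : rcfType) (n : nat) (E X : 'M[R]_n) (alpha t : R) :
  posdef E -> 0 < alpha -> alpha < 1 -> X != 0 ->
  sym_boundary E (K_E E alpha) X ->
  let S := (n%:R - alpha ^+ 2)^-1 *:
             (invmx E - (alpha ^+ 2 / \tr (invmx E *m X)) *:
                        (invmx E *m X *m invmx E)) in
  let q := fun s : R => \tr (((E + s *: X) *m S) *m ((E + s *: X) *m S)) in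
  0 < t -> t <= alpha / normE E X ->
  q t < (n%:R - alpha ^+ 2)^-1 *
        (1 - 2 * t * ((1 - alpha) / (n%:R - alpha ^+ 2)) * normE E X
               * (alpha - t * normE E X)).
Proof.
move=> [sE pE] a0 a1 nX [sX [hin hout]] S q t0 tle.
have [W hW] := chol sE pE.
have hinv := inv_chol hW.
pose f := fun Y : 'M[R]_n => W^T *m Y *m W.
have fsym : forall Y, Y^T = Y -> (f Y)^T = f Y.
  by move=> Y sY; rewrite /f !trmx_mul trmxK sY mulmxA.
have ftr : forall Y, \tr (invmx E *m Y) = \tr (f Y).
  by move=> Y; rewrite hinv /f -[in LHS]mulmxA [in LHS]mxtrace_mulC.
have fnorm : forall Y, Y^T = Y -> normE E Y = Num.sqrt (fro (f Y)).
  move=> Y sY; rewrite /normE -fro_tr fsym // hinv /f.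
  by rewrite -!mulmxA mxtrace_mulC !mulmxA.
have flin : forall Y, f (Y - X) = f Y - f X.
  by move=> Y; rewrite /f mulmxBr mulmxBl.
pose A := f X.
have sA : A^T = A := fsym X sX.
have hnu : normE E X = Num.sqrt (fro A) := fnorm X sX.
have nu0 : 0 < normE E X.
  rewrite lt_neqAle {2}hnu sqrtr_ge0 andbT; apply/eqP => h.
  by move: tle; rewrite -h invr0 mulr0 => /(lt_le_trans t0); rewrite ltxx.
have froA : fro A = normE E X ^+ 2 by rewrite hnu sqr_sqrtr // fro_ge0.
have n1 : 1 <= n%:R :> R.
  rewrite ler1n lt0n; apply/negP => /eqP n0.
  have : fro A = 0.
    rewrite /fro big_pred0 // => i; have := ltn_ord i; by move: (nat_of_ord i) => k; rewrite n0 ltn0.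
  move=> h0; have : normE E X ^+ 2 = 0 by rewrite -froA.
  by move/eqP; rewrite expf_eq0 /= gt_eqF.
have near : forall Y, Y^T = Y ->
   [/\ normE E Y <= normE E X + normE E (Y - X),
       normE E X <= normE E Y + normE E (Y - X) &
       `|\tr (invmx E *m Y) - \tr (invmx E *m X)| <= n%:R * normE E (Y - X)].
  move=> Y sY.
  have sD : (Y - X)^T = Y - X by rewrite linearB /= sY sX.
  rewrite !fnorm // !ftr flin; split.
  - by rewrite -{1}(subrK (f X) (f Y)) addrC sqrt_fro_add.
  - rewrite -(fro_opp (f Y - f X)) opprB.
    by rewrite -{1}(subrK (f Y) (f X)) addrC sqrt_fro_add.
  - by rewrite -raddfB tr_bound.

set nu := normE E X in nu0 froA hnu near tle *.
set tau := \tr (invmx E *m X) in near *.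
have an0 : 0 < alpha + n%:R by apply: ltr_pwDl; [lra | lra].
have h_in : alpha * nu <= tau.
  rewrite leNgt; apply/negP => hlt.
  have e0 : 0 < (alpha * nu - tau) / (alpha + n%:R) by rewrite divr_gt0 // subr_gt0.
  have [Y [sY dY [_ KY]]] := hin _ e0.
  have [h1 h2 h3] := near Y sY.
  rewrite ltr_pdivlMr // in dY.
  have h4 := ler_wpM2l (ltW a0) h2.
  have h5 := le_trans (ler_norm _) h3.
  nra.
have h_out : tau <= alpha * nu.
  rewrite leNgt; apply/negP => hlt.
  have e0 : 0 < (tau - alpha * nu) / (alpha + n%:R) by rewrite divr_gt0 // subr_gt0.
  have [Y [sY dY nK]] := hout _ e0.
  have KY : \tr (invmx E *m Y) < alpha * normE E Y.
    rewrite ltNge; apply/negP => h; apply: nK; split => //.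
  have [h1 h2 h3] := near Y sY.
  rewrite ltr_pdivlMr // in dY.
  have h4 := ler_wpM2l (ltW a0) h1.
  have h5 : tau - \tr (invmx E *m Y) <= n%:R * normE E (Y - X).
    by apply: le_trans h3; rewrite -normrN opprB ler_norm.
  nra.
have htau : tau = alpha * nu by apply/eqP; rewrite eq_le h_in h_out.
pose b := alpha ^+ 2 / tau.
pose c := (n%:R - alpha ^+ 2)^-1.
have hZ : invmx E - b *: (invmx E *m X *m invmx E) = W *m (1%:M - b *: A) *m W^T.
  rewrite hinv mulmxBr mulmxBl mulmx1 -scalemxAr -scalemxAl /A /f.
  by rewrite !mulmxA.
have hG : W^T *m (E + t *: X) *m W = 1%:M + t *: A.
  by rewrite mulmxDr mulmxDl hW -scalemxAr -scalemxAl.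
have hq : q t = c ^+ 2 * \tr (((1%:M + t *: A) *m (1%:M - b *: A)) *m
                                ((1%:M + t *: A) *m (1%:M - b *: A))).
  rewrite /q /S hZ -!scalemxAr -!scalemxAl scalerA mxtraceZ expr2; congr (_ * _).
  rewrite -hG !mulmxA [in LHS]mxtrace_mulC !mulmxA //.
rewrite hq trace_expand.
have trA : \tr A = alpha * nu by rewrite -htau /tau ftr.
have m2 : \tr (A *m A) = nu ^+ 2 by rewrite -froA -fro_tr sA.
have BT : (A *m A)^T = A *m A by rewrite trmx_mul sA.
have froB : fro (A *m A) <= nu ^+ 4.
  apply: (le_trans (fro_mul A A)); rewrite froA -exprD //.
have m4 : \tr (A *m A *m A *m A) <= nu ^+ 4.
  by rewrite -mulmxA -[X in _ *m X]BT fro_tr.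
have m3 : \tr (A *m A *m A) <= nu ^+ 3.
  apply: le_of_sqr; first by rewrite exprn_ge0 // ltW.
  rewrite -mulmxA -[X in _ *m X]BT.
  apply: (le_trans (tr_cs A (A *m A))).
  rewrite froA -exprM; have -> : (3 * 2 = 2 + 4)%N by [].
  by rewrite exprD ler_wpM2l // exprn_ge0 // ltW.
rewrite trA m2.
have hb : b * nu = alpha.
  rewrite /b htau; field; rewrite ?gt_eqF //; lra.
have d0 : 0 < n%:R - alpha ^+ 2 by nra.
have hc : c * (n%:R - alpha ^+ 2) = 1 by rewrite /c mulVf // gt_eqF.
have tnu : t * nu <= alpha by rewrite -ler_pdivlMr.
exact: (scalar_ineq n1 nu0 hb a0 a1 t0 tnu m3 m4 hc).
Qed.
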